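(* The numbers $P_{1^{-1}6^{1}10^{1}15^{-1}}(n)$, defined by $\sum_{n\ge0}P_{1^{-1}6^{1}10^{1}15^{-1}}(n)q^n=\frac{f_6f_{10}}{f_1f_{15}}$, form a $2$-convolutive sequence.
   Context: $f_i:=(q^i;q^i)_\infty=\prod_{k\ge1}(1-q^{ik})$. A sequence $(a_n)_{n\ge0}$ is $m$-convolutive if $\sum_{n\ge0}a_{mn}q^n=\big(\sum_{n\ge0}a_nq^n\big)^m$. *)

(* Defs.v *)
From mathcomp Require Import all_boot all_order all_algebra.
Set Implicit Arguments. Unset Strict Implicit. Unset Printing Implicit Defensive.
Import GRing.Theory.
Local Open Scope ring_scope.

Definition ps := nat -> int.

Definition ps_mul (a b : ps) : ps :=
  fun n => \sum_(i < n.+1) a i * b (n - i)%N.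

Definition ps_one : ps := fun n => if n == 0%N then 1 else 0.

Definition ps_pow (a : ps) (m : nat) : ps := iter m (ps_mul a) ps_one.

Definition convolutive (m : nat) (a : ps) : Prop :=
  forall n, a (m * n)%N = ps_pow a m n.

(* Truncation at N of f_i = prod_(k>=1) (1 - q^(i k)): the factors k = 1..N.
   For i >= 1 this has the same coefficients as f_i in degrees <= N. *)
Definition eta_trunc (i N : nat) : {poly int} :=
  \prod_(k < N) (1 - 'X^(i * k.+1)).

(* Truncation of 1/f_i = prod_(k>=1) sum_(j>=0) q^(i k j): factors k = 1..N,
   geometric series truncated at j = N. For i >= 1 it agrees with 1/f_i in
   degrees <= N. *)
Definition etainv_trunc (i N : nat) : {poly int} :=
  \prod_(k < N) \sum_(j < N.+1) 'X^(i * k.+1 * j).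

Definition P_6_10_1_15 : ps := fun n =>
  (eta_trunc 6 n * eta_trunc 10 n * etainv_trunc 1 n * etainv_trunc 15 n)`_n.

(* Main.v *)
Require Import Defs.
From mathcomp Require Import all_boot all_order all_algebra.
From mathcomp Require Import zify ring lra.
Set Implicit Arguments. Unset Strict Implicit. Unset Printing Implicit Defensive.
Import GRing.Theory Num.Theory.
Local Open Scope ring_scope.

Definition cg (N : nat) (p q : {poly int}) := exists r, p - q = 'X^(N.+1) * r.

Lemma cg_refl N p : cg N p p.
Proof. by exists 0; rewrite subrr mulr0. Qed.
Lemma cg_sym N p q : cg N p q -> cg N q p.
Proof. by case=> r e; exists (- r); rewrite mulrN -e opprB. Qed.
Lemma cg_trans N p q s : cg N p q -> cg N q s -> cg N p s.
Proof. by case=> r e [r' e']; exists (r + r'); rewrite mulrDr -e -e' addrA subrK. Qed.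
Lemma cg_add N p q p' q' : cg N p q -> cg N p' q' -> cg N (p + p') (q + q').
Proof. by case=> r e [r' e']; exists (r + r'); rewrite mulrDr -e -e'; ring. Qed.
Lemma cg_opp N p q : cg N p q -> cg N (- p) (- q).
Proof. by case=> r e; exists (- r); rewrite mulrN -e; ring. Qed.
Lemma cg_mul N p q p' q' : cg N p q -> cg N p' q' -> cg N (p * p') (q * q').
Proof.
case=> r e [r' e']; exists (r * p' + q * r').
by rewrite mulrDr mulrA -e mulrCA -e'; ring.
Qed.
Lemma cg_mull N s p q : cg N p q -> cg N (s * p) (s * q).
Proof. by apply: cg_mul; apply: cg_refl. Qed.
Lemma cg_mulr N s p q : cg N p q -> cg N (p * s) (q * s).
Proof. by move=> h; apply: cg_mul h (cg_refl _ _). Qed.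
Lemma cg_le N M p q : (M <= N)%N -> cg N p q -> cg M p q.
Proof.
move=> hMN [r e]; exists ('X^(N - M) * r).
by rewrite e mulrA -exprD; congr (_ ^+ _ * _); lia.
Qed.
Lemma cg_coef N p q i : cg N p q -> (i <= N)%N -> p`_i = q`_i.
Proof.
case=> r e hi; apply/eqP; rewrite -subr_eq0 -coefB e coefXnM.
by rewrite ifT //; lia.
Qed.
Lemma cg_Xn0 N e : (N < e)%N -> cg N ('X^e) 0.
Proof. by move=> h; exists 'X^(e - N.+1); rewrite subr0 -exprD; congr (_ ^+ _); lia. Qed.
Lemma cg_X0 N e p : (N < e)%N -> cg N ('X^e * p) 0.
Proof. by move=> h; rewrite -(mul0r p); apply: cg_mulr; apply: cg_Xn0. Qed.

Lemma cg_prod N (I : Type) (r : seq I) (P : pred I) (F G : I -> {poly int}) :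
  (forall i, P i -> cg N (F i) (G i)) ->
  cg N (\prod_(i <- r | P i) F i) (\prod_(i <- r | P i) G i).
Proof.
move=> h; apply: (big_ind2 (cg N)) => //; first exact: cg_refl.
by move=> *; apply: cg_mul.
Qed.
Lemma cg_sum N (I : Type) (r : seq I) (P : pred I) (F G : I -> {poly int}) :
  (forall i, P i -> cg N (F i) (G i)) ->
  cg N (\sum_(i <- r | P i) F i) (\sum_(i <- r | P i) G i).
Proof.
move=> h; apply: (big_ind2 (cg N)) => //; first exact: cg_refl.
by move=> *; apply: cg_add.
Qed.
Lemma cg_prod1 N (I : Type) (r : seq I) (P : pred I) (F : I -> {poly int}) :
  (forall i, P i -> cg N (F i) 1) -> cg N (\prod_(i <- r | P i) F i) 1.
Proof.
move=> h; apply: (big_ind (fun x => cg N x 1)) => //; first exact: cg_refl.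
by move=> x y hx hy; rewrite -(mulr1 1); apply: cg_mul.
Qed.
Lemma cg_exp N p q k : cg N p q -> cg N (p ^+ k) (q ^+ k).
Proof.
move=> h; elim: k => [|k ih]; first exact: cg_refl.
by rewrite !exprS; apply: cg_mul.
Qed.
Lemma cg_comp N k p q : (0 < k)%N -> cg N p q -> cg N (p \Po 'X^k) (q \Po 'X^k).
Proof.
move=> hk [r e]; exists ('X^((k - 1) * N.+1) * (r \Po 'X^k)).
rewrite -comp_polyB e comp_polyM comp_Xn_poly -exprM mulrA -exprD.
by congr (_ ^+ _ * _); nia.
Qed.

Lemma cg_prod_stab N (F : nat -> {poly int}) a b :
  (forall i, (N <= i)%N -> cg N (F i) 1) -> (N <= a)%N -> (N <= b)%N ->
  cg N (\prod_(i < a) F i) (\prod_(i < b) F i).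
Proof.
move=> h ha hb.
have key c : (N <= c)%N -> cg N (\prod_(i < c) F i) (\prod_(i < N) F i).
  move=> hc; rewrite -!(big_mkord xpredT) (big_cat_nat (n := N)) //=.
  rewrite -[X in cg _ _ X]mulr1; apply: cg_mull.
  rewrite big_nat_cond; apply: cg_prod1 => i /andP[/andP[hi _] _]; exact: h.
apply: cg_trans (key _ ha) _; apply: cg_sym; exact: key.
Qed.
Lemma cg_1X N e : (N < e)%N -> cg N (1 - 'X^e) 1.
Proof. by move=> h; exists (- 'X^(e - N.+1)); rewrite mulrN -exprD subnKC // addrC addKr. Qed.

Lemma eta_stab k N a b : (0 < k)%N -> (N <= a)%N -> (N <= b)%N ->
  cg N (eta_trunc k a) (eta_trunc k b).
Proof.
move=> hk ha hb; apply: (cg_prod_stab (F := fun j => 1 - 'X^(k * j.+1))) => // i hi.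
apply: cg_1X; nia.
Qed.

Lemma geom (y : {poly int}) n : (1 - y) * \sum_(i < n) y ^+ i = 1 - y ^+ n.
Proof. by rewrite -opprB mulNr -subrX1 opprB. Qed.

Lemma eta_inv k M N : (0 < k)%N -> (N <= M)%N ->
  cg N (eta_trunc k M * etainv_trunc k M) 1.
Proof.
move=> hk hM; rewrite /eta_trunc /etainv_trunc -big_split /=.
apply: cg_prod1 => j _.
have -> : \sum_(l < M.+1) 'X^(k * j.+1 * l) = \sum_(l < M.+1) ('X^(k * j.+1)) ^+ l :> {poly int}.
  by apply: eq_bigr => l _; rewrite exprM.
rewrite geom -exprM; apply: cg_1X; nia.
Qed.

Lemma etainv_stab k N a b : (0 < k)%N -> (N <= a)%N -> (N <= b)%N ->
  cg N (etainv_trunc k a) (etainv_trunc k b).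
Proof.
move=> hk ha hb.
have h1 := eta_inv hk ha; have h2 := eta_inv hk hb; have h3 := eta_stab hk ha hb.
apply: (cg_trans (q := etainv_trunc k a * (eta_trunc k b * etainv_trunc k b))).
  by rewrite -[X in cg _ X _]mulr1; apply: cg_mull; apply: cg_sym.
rewrite mulrA; apply: (cg_trans (q := (etainv_trunc k a * eta_trunc k a) * etainv_trunc k b)).
  by apply: cg_mulr; apply: cg_mull; apply: cg_sym.
by rewrite -[X in cg _ _ X]mul1r; apply: cg_mulr; rewrite mulrC.
Qed.

Definition dd k M : {poly int} := \prod_(j < M) (1 + 'X^(k * j.+1)).

Lemma eta_dd k M : eta_trunc k M * dd k M = eta_trunc (k * 2) M.
Proof.
rewrite /eta_trunc /dd -big_split /=; apply: eq_bigr => j _.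
have -> : (k * 2 * j.+1 = (k * j.+1) * 2)%N by lia.
by rewrite [in RHS]exprM; ring.
Qed.

Lemma eta_comp k M m : (eta_trunc k M) \Po 'X^m = eta_trunc (k * m) M.
Proof.
rewrite /eta_trunc rmorph_prod; apply: eq_bigr => j _.
rewrite rmorphB rmorph1 /= comp_Xn_poly -exprM; congr (_ - 'X^_); lia.
Qed.
Lemma etainv_comp k M m : (etainv_trunc k M) \Po 'X^m = etainv_trunc (k * m) M.
Proof.
rewrite /etainv_trunc rmorph_prod; apply: eq_bigr => j _.
rewrite rmorph_sum; apply: eq_bigr => l _ /=.
rewrite comp_Xn_poly -exprM; congr ('X^_); lia.
Qed.
Lemma dd_comp k M m : (dd k M) \Po 'X^m = dd (k * m) M.
Proof.
rewrite /dd rmorph_prod; apply: eq_bigr => j _.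
rewrite rmorphD rmorph1 /= comp_Xn_poly -exprM; congr (_ + 'X^_); lia.
Qed.
Lemma bump0 i : bump 0 i = i.+1. Proof. by []. Qed.

Fixpoint qb (q : {poly int}) (m k : nat) : {poly int} :=
  match m, k with
  | _, 0 => 1
  | 0, _.+1 => 0
  | m'.+1, k'.+1 => qb q m' k' + q ^+ k'.+1 * qb q m' k'.+1
  end.

Lemma qb_gt q m k : (m < k)%N -> qb q m k = 0.
Proof.
elim: m k => [|m ih] [|k] //= h.
by rewrite !ih ?mulr0 ?addr0 //; lia.
Qed.

Lemma qb_mm q m : qb q m m = 1.
Proof. by elim: m => //= m ->; rewrite qb_gt ?mulr0 ?addr0. Qed.

Lemma qb0 q m : qb q m 0 = 1. Proof. by case: m. Qed.
Lemma qbSS q m k : qb q m.+1 k.+1 = qb q m k + q ^+ k.+1 * qb q m k.+1. Proof. by []. Qed.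

Lemma rothe q (m : nat) : forall z w : {poly int},
  \prod_(i < m) (w + z * q ^+ i) =
  \sum_(k < m.+1) q ^+ 'C(k, 2) * qb q m k * z ^+ k * w ^+ (m - k).
Proof.
elim: m => [|m ih] z w.
  by rewrite big_ord0 big_ord1 /= !expr0 !mulr1.
rewrite big_ord_recl expr0 mulr1.
have -> : \prod_(i < m) (w + z * q ^+ (bump 0 i)) = \prod_(i < m) (w + (z * q) * q ^+ i).
  by apply: eq_bigr => i _; rewrite bump0 exprS; ring.
rewrite ih mulrDl.
set S := \sum_(k < m.+1) _.
rewrite [RHS]big_ord_recl.
have h0 : q ^+ 'C(0, 2) * qb q m.+1 0 * z ^+ 0 * w ^+ (m.+1 - 0) = w ^+ m.+1.
  by rewrite qb0 bin0n /= expr0 !mulr1 mul1r subn0.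
rewrite h0.
have eB : \sum_(i < m.+1) q ^+ 'C(bump 0 i, 2) * qb q m.+1 (bump 0 i) * z ^+ bump 0 i * w ^+ (m.+1 - bump 0 i)
  = z * S + \sum_(k < m.+1) q ^+ 'C(k.+1, 2) * (q ^+ k.+1 * qb q m k.+1) * z ^+ k.+1 * w ^+ (m - k).
  rewrite /S mulr_sumr -big_split /=; apply: eq_bigr => k _.
  rewrite bump0 ?add0n ?qbSS.
  rewrite binS bin1 exprD subSS exprMn !exprS.
  ring.
rewrite eB addrCA (addrC (w * S)); congr (_ + _).
rewrite /S mulr_sumr big_ord_recl qb0 bin0n /= !expr0 mulr1 !mul1r subn0 -exprS.
congr (_ + _).
rewrite big_ord_recr qb_gt ?mulr0 ?mul0r ?addr0 //= addr0.
apply: eq_bigr => k _; rewrite bump0 exprMn.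
have -> : (m - k = (m - k.+1).+1)%N by have := ltn_ord k; lia.
rewrite !exprS; ring.
Qed.
Definition ph (q : {poly int}) j := \prod_(i < j) (1 - q ^+ i.+1).

Lemma phS q j : ph q j.+1 = ph q j * (1 - q ^+ j.+1).
Proof. by rewrite /ph big_ord_recr. Qed.

Lemma qb_fact q m : forall a b, (a + b = m)%N -> ph q a * ph q b * qb q m a = ph q m.
Proof.
elim: m => [|m ih] a b hab.
  have ea : a = 0%N by lia.
  have eb : b = 0%N by lia.
  by subst; rewrite /ph big_ord0 !mul1r.
case: a hab => [|a] hab.
  have -> : b = m.+1 by lia.
  by rewrite qb0 /ph big_ord0 mul1r mulr1.
rewrite qbSS.
case: b hab => [|b] hab.
  have ea : a = m by lia.
  subst a; rewrite (@qb_gt q m m.+1) // mulr0 addr0 qb_mm /ph big_ord0 !mulr1; done.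
have h1 := ih a b.+1 ltac:(lia).
have h2 := ih a.+1 b ltac:(lia).
rewrite !phS in h2 *.
have -> : ph q a * (1 - q ^+ a.+1) * (ph q b * (1 - q ^+ b.+1)) *
    (qb q m a + q ^+ a.+1 * qb q m a.+1)
  = (1 - q ^+ a.+1) * (ph q a * (ph q b * (1 - q ^+ b.+1)) * qb q m a)
    + q ^+ a.+1 * (1 - q ^+ b.+1) * (ph q a * (1 - q ^+ a.+1) * ph q b * qb q m a.+1) by ring.
rewrite h2 -phS h1.
have -> : q ^+ m.+1 = q ^+ a.+1 * q ^+ b.+1 by rewrite -exprD; congr (_ ^+ _); lia.
ring.
Qed.

Lemma ph_eta k j : ph ('X^k) j = eta_trunc k j.
Proof. by rewrite /ph /eta_trunc; apply: eq_bigr => i _; rewrite -exprM. Qed.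

Lemma qb_lim k N a b : (0 < k)%N -> (N <= a)%N -> (N <= b)%N ->
  cg N (eta_trunc k N * qb ('X^k) (a + b) a) 1.
Proof.
move=> hk ha hb.
set E := eta_trunc k N; set I := etainv_trunc k N; set Q := qb _ _ _.
have hEI : cg N (E * I) 1 by apply: eta_inv.
have hf := qb_fact ('X^k) (erefl (a + b)%N); rewrite !ph_eta in hf.
have hEEQ : cg N (E * E * Q) E.
  apply: (cg_trans (q := eta_trunc k a * eta_trunc k b * Q)).
    by apply: cg_mulr; apply: cg_mul; apply: eta_stab.
  rewrite /Q hf; apply: eta_stab => //; lia.
apply: (cg_trans (q := E * Q * (E * I))).
  by rewrite -[X in cg _ X _]mulr1; apply: cg_mull; apply: cg_sym.
have -> : E * Q * (E * I) = (E * E * Q) * I by ring.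
apply: cg_trans hEI; apply: cg_mulr; exact: hEEQ.
Qed.
Definition tz n j := if (n <= j)%N then 'C((j - n).+1, 2) else 'C(n - j, 2).
Definition Psi k n : {poly int} := \sum_(j < n.*2.+1) 'X^(k * tz n j).

Lemma C2x x : ('C(x, 2) * 2 + x = x * x)%N.
Proof. elim: x => [|x ih] //; rewrite binS bin1; nia. Qed.

Lemma exp_ident n j : (j <= n.*2)%N ->
  ('C(j, 2) + j + n * (n.*2 - j) = 'C(n.+1, 2) + n * n + tz n j)%N.
Proof.
move=> hj; rewrite /tz; case: ifP => hn.
  have [d ed] : exists d, j = (n + d)%N by exists (j - n)%N; lia.
  subst j; have -> : (n + d - n = d)%N by lia.
  have -> : (n.*2 - (n + d) = n - d)%N by lia.
  rewrite -addnn in hj.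
  have : (d <= n)%N by lia.
  move=> hd; have [e ee] : exists e, n = (d + e)%N by exists (n - d)%N; lia.
  subst n; have -> : (d + e - d = e)%N by lia.
  have h1 := C2x (d + e + d); have h2 := C2x (d + e).+1; have h3 := C2x d.+1.
  lia.
have [e ee] : exists e, n = (j + e)%N by exists (n - j)%N; lia.
subst n; have -> : (j + e - j = e)%N by lia.
have -> : ((j + e).*2 - j = j + e.*2)%N by lia.
rewrite -!addnn.
have h1 := C2x j; have h2 := C2x (j + e).+1; have h3 := C2x e.
lia.
Qed.

Lemma prodX (q : {poly int}) n : \prod_(i < n) q ^+ i.+1 = q ^+ 'C(n.+1, 2).
Proof.
elim: n => [|n ih]; first by rewrite big_ord0.
by rewrite big_ord_recr /= ih -exprD [in RHS]binS bin1.
Qed.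

Lemma jtp (q : {poly int}) n :
  q ^+ ('C(n.+1, 2) + n * n) * ((\prod_(i < n) (1 + q ^+ i.+1)) * (\prod_(i < n) (1 + q ^+ i)))
  = \sum_(j < n.*2.+1) q ^+ ('C(n.+1, 2) + n * n) * (q ^+ tz n j * qb q n.*2 j).
Proof.
have R := rothe q n.*2 q (q ^+ n).
have -> : \sum_(j < n.*2.+1) q ^+ ('C(n.+1, 2) + n * n) * (q ^+ tz n j * qb q n.*2 j)
   = \sum_(k < n.*2.+1) q ^+ 'C(k, 2) * qb q n.*2 k * q ^+ k * (q ^+ n) ^+ (n.*2 - k).
  apply: eq_bigr => j _; rewrite -!exprM mulrA -exprD -exp_ident; last by have := ltn_ord j; lia.
  by rewrite !exprD; ring.
rewrite -R.
have -> : (n.*2 = n + n)%N by rewrite addnn.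
rewrite big_split_ord /=.
have -> : \prod_(i < n) (q ^+ n + q * q ^+ (lshift n i)) =
    (\prod_(i < n) q ^+ i.+1) * \prod_(i < n) (1 + q ^+ (n - i.+1)).
  rewrite -big_split /=; apply: eq_bigr => i _ /=.
  by rewrite -exprS mulrDr mulr1 -exprD (subnKC (ltn_ord i)) addrC.
have -> : \prod_(i < n) (q ^+ n + q * q ^+ (rshift n i)) =
    (\prod_(i < n) q ^+ n) * \prod_(i < n) (1 + q ^+ i.+1).
  rewrite -big_split /=; apply: eq_bigr => i _ /=.
  by rewrite mulrDr mulr1 -exprS -exprD addnS.
rewrite prodX prodr_const card_ord -exprM.
have -> : \prod_(i < n) (1 + q ^+ (n - i.+1)) = \prod_(i < n) (1 + q ^+ i).
  rewrite [RHS](reindex_inj rev_ord_inj) /=; apply: eq_bigr => i _.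
  by have := ltn_ord i; move=> hi; congr (1 + q ^+ _); lia.
rewrite exprD; ring.
Qed.
Lemma cg_1pX N e : (N < e)%N -> cg N (1 + 'X^e) 1.
Proof. by move=> h; exists ('X^(e - N.+1)); rewrite -exprD subnKC // addrC addKr. Qed.

Lemma dd_stab k N a b : (0 < k)%N -> (N <= a)%N -> (N <= b)%N ->
  cg N (dd k a) (dd k b).
Proof.
move=> hk ha hb; apply: (cg_prod_stab (F := fun j => 1 + 'X^(k * j.+1))) => // i hi.
apply: cg_1pX; nia.
Qed.

Lemma C2ge x : (x <= 'C(x.+1, 2))%N.
Proof. by rewrite binS bin1 leq_addl. Qed.

Lemma tz_bound N n j : (tz n j <= N)%N -> (N.*2 < n)%N -> (j <= n.*2)%N ->
  (N <= j)%N /\ (N <= n.*2 - j)%N.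
Proof.
rewrite /tz; case: ifP => hn h1 h2 h3.
  have := C2ge (j - n); lia.
have [s es] : exists s, (n - j = s.+1)%N by exists (n - j).-1; lia.
rewrite es in h1; have := C2ge s; lia.
Qed.

Lemma gauss k N M n : (0 < k)%N -> (N <= M)%N -> (N.*2 < n)%N ->
  cg N (Psi k n) (2%:R * (eta_trunc (k * 2) M * dd k M)).
Proof.
move=> hk hM hn.
case: n hn => [|n'] hn; first by lia.
set n := n'.+1.
set q : {poly int} := 'X^k.
have J := jtp q n.
set e := ('C(n.+1, 2) + n * n)%N in J.
have nz : q ^+ e != 0.
  by rewrite /q -exprM -size_poly_eq0 size_polyXn.
set A := \prod_(i < n) (1 + q ^+ i.+1) in J.
set B := \prod_(i < n) (1 + q ^+ i) in J.
have J' : A * B = \sum_(j < n.*2.+1) q ^+ tz n j * qb q n.*2 j.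
  by apply: (mulfI nz); rewrite J mulr_sumr.
set E := eta_trunc k N.
have S1 : cg N (E * (A * B)) (Psi k n).
  rewrite J' mulr_sumr /Psi; apply: cg_sum => j _.
  rewrite /q -exprM mulrCA.
  case: (leqP (tz n j) N) => h.
    have [hj1 hj2] := tz_bound h hn (ltn_ord j : (j < n.*2.+1)%N).
    rewrite -[X in cg _ _ X]mulr1; apply: cg_mull.
    have -> : qb 'X^k n.*2 j = qb 'X^k (j + (n.*2 - j)) j.
      by rewrite subnKC //; have := ltn_ord j; lia.
    exact: qb_lim.
  apply: (cg_trans (q := 0)); first by apply: cg_X0; nia.
  by apply: cg_sym; apply: cg_Xn0; nia.
have hA : A = dd k n.
  by rewrite /A /dd; apply: eq_bigr => i _; rewrite /q -exprM.
have hB : B = 2%:R * dd k n'.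
  rewrite /B /n big_ord_recl expr0 /dd; congr (_ * _).
  by apply: eq_bigr => i _; rewrite /q -exprM.
have S2 : cg N (E * (A * B)) (2%:R * (eta_trunc (k * 2) M * dd k M)).
  rewrite hA hB -eta_dd.
  have -> : E * (dd k n * (2%:R * dd k n')) = 2%:R * ((E * dd k n) * dd k n') by ring.
  apply: cg_mull; apply: cg_mul; first apply: cg_mul.
  - by apply: eta_stab.
  - by apply: dd_stab => //; lia.
  - by apply: dd_stab => //; lia.
by apply: cg_trans (cg_sym S1) S2.
Qed.
Definition Fm (u v : int) : int * int :=
  if ((u + v) %% 4)%Z == 0 then (((3*u+5*v) %/ 2)%Z, ((u-v) %/ 2)%Z)
  else (((3*u-5*v) %/ 2)%Z, - ((u+v) %/ 2)%Z).
Definition Gm (x y : int) : int * int :=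
  if ((x + y) %% 8)%Z == 0 then (((x+5*y) %/ 4)%Z, ((x-3*y) %/ 4)%Z)
  else (((x-5*y) %/ 4)%Z, ((-x-3*y) %/ 4)%Z).

Lemma GF u v : (u %% 2)%Z = 1 -> (v %% 2)%Z = 1 -> Gm (Fm u v).1 (Fm u v).2 = (u, v).
Proof.
move=> hu hv; rewrite /Fm.
case: ifP => /eqP h; rewrite /Gm /=; case: ifP => /eqP h2; congr pair; lia.
Qed.
Lemma m8 (x y s : int) : (x %% 2)%Z = 1 -> (y %% 2)%Z = 1 -> x * x + 15 * (y * y) = 16  *  s ->
  ((x + y) %% 8)%Z = 0 \/ ((x - y) %% 8)%Z = 0.
Proof.
move=> hx hy e.
have [p [r [ex hr]]] : exists p r : int, x = 8 * p + r /\ 0 <= r < 8 by exists (x %/ 8)%Z, (x %% 8)%Z; lia.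
have [q [r' [ey hr']]] : exists p r : int, y = 8 * p + r /\ 0 <= r < 8 by exists (y %/ 8)%Z, (y %% 8)%Z; lia.
subst x y.
have e2 : r * r + 15 * (r' * r') = (8 * p + r) * (8 * p + r) + 15 * ((8 * q + r') * (8 * q + r')) - 16 * (4 * p * p + p * r + 60 * q * q + 15 * q * r') by ring.
rewrite e in e2.
have : (r = 1 \/ r = 3 \/ r = 5 \/ r = 7) by lia.
have : (r' = 1 \/ r' = 3 \/ r' = 5 \/ r' = 7) by lia.
move=> H1 H2; set w := (4 * p * p + _) in e2.
case: H1 => [->|[->|[->|->]]] in e2  * ; case: H2 => [->|[->|[->|->]]] in e2  * ; lia.
Qed.

Lemma Fm_ok (u v s : int) : (u %% 2)%Z = 1 -> (v %% 2)%Z = 1 -> 3 * (u * u) + 5 * (v * v) = 8 * s ->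
  ((Fm u v).1 %% 2)%Z = 1 /\ ((Fm u v).2 %% 2)%Z = 1 /\
  (Fm u v).1 * (Fm u v).1 + 15 * ((Fm u v).2 * (Fm u v).2) = 16 * s.
Proof.
move=> hu hv e; rewrite /Fm; case: ifP => /eqP h /=.
  set x := (_ %/ 2)%Z; set y := (_ %/ 2)%Z.
  have hx : 2 * x = 3 * u + 5 * v by rewrite /x; lia.
  have hy : 2 * y = u - v by rewrite /y; lia.
  have e4 : 4 * (x * x + 15 * (y * y)) = 8 * (3 * (u * u) + 5 * (v * v)).
    have -> : 4 * (x * x + 15 * (y * y)) = (2 * x) * (2 * x) + 15 * ((2 * y) * (2 * y)) by ring.
    by rewrite hx hy; ring.
  clearbody x y; rewrite e in e4; split; [by clear e4; lia|]; split; [by clear e4; lia|]. move: e4; clear; lia.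
set x := (_ %/ 2)%Z; set y := (- _)%Z.
have hx : 2 * x = 3 * u - 5 * v by rewrite /x; lia.
have hy : 2 * y = - (u + v) by rewrite /y; lia.
have e4 : 4 * (x * x + 15 * (y * y)) = 8 * (3 * (u * u) + 5 * (v * v)).
  have -> : 4 * (x * x + 15 * (y * y)) = (2 * x) * (2 * x) + 15 * ((2 * y) * (2 * y)) by ring.
  by rewrite hx hy; ring.
clearbody x y; rewrite e in e4.
have e5 : x * x + 15 * (y * y) = 16 * s by move: e4; clear; lia.
clear e e4; split; first lia; split; first lia; exact e5.
Qed.

Lemma Gm_ok (x y s : int) : (x %% 2)%Z = 1 -> (y %% 2)%Z = 1 -> x * x + 15 * (y * y) = 16 * s ->
  ((Gm x y).1 %% 2)%Z = 1 /\ ((Gm x y).2 %% 2)%Z = 1 /\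
  3 * ((Gm x y).1 * (Gm x y).1) + 5 * ((Gm x y).2 * (Gm x y).2) = 8 * s /\
  Fm (Gm x y).1 (Gm x y).2 = (x, y).
Proof.
move=> hx hy e; have h8 := @m8 x y s hx hy e.
rewrite /Gm; case: ifP => /eqP h /=.
  set u := (_ %/ 4)%Z; set v := (_ %/ 4)%Z.
  have hu : 4 * u = x + 5 * y by rewrite /u; lia.
  have hv : 4 * v = x - 3 * y by rewrite /v; lia.
  have e4 : 16 * (3 * (u * u) + 5 * (v * v)) = 8 * (x * x + 15 * (y * y)).
    have -> : 16 * (3 * (u * u) + 5 * (v * v)) = 3 * ((4 * u) * (4 * u)) + 5 * ((4 * v) * (4 * v)) by ring.
    by rewrite hu hv; ring.
  clearbody u v; rewrite e in e4.
  have e5 : 3 * (u * u) + 5 * (v * v) = 8 * s by move: e4; clear; lia.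
  clear e e4; split; first lia; split; first lia; split; first exact e5; clear e5.
  rewrite /Fm; case: ifP => /eqP h2; congr pair; lia.
set u := (_ %/ 4)%Z; set v := (_ %/ 4)%Z.
have hu : 4 * u = x - 5 * y by rewrite /u; lia.
have hv : 4 * v = - x - 3 * y by rewrite /v; lia.
have e4 : 16 * (3 * (u * u) + 5 * (v * v)) = 8 * (x * x + 15 * (y * y)).
  have -> : 16 * (3 * (u * u) + 5 * (v * v)) = 3 * ((4 * u) * (4 * u)) + 5 * ((4 * v) * (4 * v)) by ring.
  by rewrite hu hv; ring.
clearbody u v; rewrite e in e4.
  have e5 : 3 * (u * u) + 5 * (v * v) = 8 * s by move: e4; clear; lia.
  clear e e4; split; first lia; split; first lia; split; first exact e5; clear e5.
rewrite /Fm; case: ifP => /eqP h2; congr pair; lia.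
Qed.

Definition toX (n i : nat) : int := i%:Z * 2 - n%:Z * 2 + 1.
Definition ofX (n : nat) (x : int) : 'I_(n.*2.+1) := inord (absz (((x - 1) %/ 2)%Z + n%:Z)).

Lemma toX_odd n i : ((toX n i) %% 2)%Z = 1.
Proof. rewrite /toX; lia. Qed.

Lemma toX_sq n i : (i <= n.*2)%N -> 8 * (tz n i)%:Z + 1 = toX n i * toX n i.
Proof.
move=> hi; rewrite /tz /toX; case: ifP => hn.
  have [d ed] : exists d, i = (n + d)%N by exists (i - n)%N; lia.
  subst i; have -> : (n + d - n = d)%N by lia.
  have h := C2x d.+1; lia.
have [s es] : exists s, n = (i + s.+1)%N by exists (n - i).-1; lia.
subst n; have -> : (i + s.+1 - i = s.+1)%N by lia.
have h := C2x s.+1; lia.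
Qed.

Lemma toX_ofX n x : (x %% 2)%Z = 1 -> - (n%:Z * 2) + 1 <= x -> x <= n%:Z * 2 + 1 ->
  toX n (ofX n x) = x.
Proof.
move=> h1 h2 h3; rewrite /ofX /toX inordK; first lia.
rewrite ltnS; lia.
Qed.

Lemma ofX_toX n (i : 'I_(n.*2.+1)) : ofX n (toX n i) = i.
Proof.
apply: val_inj; rewrite /ofX /toX /= inordK; first lia.
have := ltn_ord i; lia.
Qed.

Lemma sq_bound (x s : int) : 1 <= s -> x * x <= 16 * s -> - (4 * s) <= x <= 4 * s.
Proof. move=> h1 h2; apply/andP; split; nia. Qed.

Lemma card_bij (T : finType) (A B : {set T}) (f g : T -> T) :
  (forall p, p \in A -> f p \in B) -> (forall p, p \in B -> g p \in A) ->
  (forall p, p \in A -> g (f p) = p) -> (forall p, p \in B -> f (g p) = p) ->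
  #|A| = #|B|.
Proof.
move=> fAB gBA gf fg; apply/eqP; rewrite eqn_leq; apply/andP; split.
  rewrite -(card_in_imset (f := f) (D := A)); last by move=> x y hx hy e; rewrite -(gf x hx) -(gf y hy) e.
  by apply: subset_leq_card; apply/subsetP => y /imsetP [x hx ->]; apply: fAB.
rewrite -(card_in_imset (f := g) (D := B)); last by move=> x y hx hy e; rewrite -(fg x hx) -(fg y hy) e.
by apply: subset_leq_card; apply/subsetP => y /imsetP [x hx ->]; apply: gBA.
Qed.

Definition fB n (p : 'I_(n.*2.+1) * 'I_(n.*2.+1)) : 'I_(n.*2.+1) * 'I_(n.*2.+1) :=
  (ofX n (Fm (toX n p.1) (toX n p.2)).1, ofX n (Fm (toX n p.1) (toX n p.2)).2).
Definition gB n (p : 'I_(n.*2.+1) * 'I_(n.*2.+1)) : 'I_(n.*2.+1) * 'I_(n.*2.+1) :=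
  (ofX n (Gm (toX n p.1) (toX n p.2)).1, ofX n (Gm (toX n p.1) (toX n p.2)).2).

Lemma toX_sq' n (i : 'I_(n.*2.+1)) : 8 * (tz n i)%:Z + 1 = toX n i * toX n i.
Proof. by apply: toX_sq; have := ltn_ord i; lia. Qed.

Lemma count_eq n t : (4 * t + 4 < n.*2)%N ->
  #|[set p : 'I_(n.*2.+1) * 'I_(n.*2.+1) | (1 * tz n p.1 + 15 * tz n p.2 == t.*2)%N]| =
  #|[set p : 'I_(n.*2.+1) * 'I_(n.*2.+1) | (3 * tz n p.1 + 5 * tz n p.2 == t)%N]|.
Proof.
move=> hn.
have hs : (1 : int) <= t.+1%:Z by lia.
apply: (@card_bij _ _ _ (@gB n) (@fB n)).
- move=> [i j]; rewrite !inE /= => /eqP e.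
  have hx := toX_sq' i; have hy := toX_sq' j.
  have E : toX n i * toX n i + 15 * (toX n j * toX n j) = 16 * t.+1%:Z by lia.
  have [o1 [o2 [e2 _]]] := Gm_ok (toX_odd n i) (toX_odd n j) E.
  set u := (Gm _ _).1 in o1 o2 e2 *; set v := (Gm _ _).2 in o1 o2 e2 *.
  clearbody u v.
  have bu : u * u <= 16 * t.+1%:Z by move: e2; clear; nia.
  have bv : v * v <= 16 * t.+1%:Z by move: e2; clear; nia.
  have [bu1 bu2] := andP (sq_bound hs bu); have [bv1 bv2] := andP (sq_bound hs bv).
  have tu := toX_ofX o1 (ltac:(lia) : - (n%:Z * 2) + 1 <= u) (ltac:(lia) : u <= n%:Z * 2 + 1).
  have tv := toX_ofX o2 (ltac:(lia) : - (n%:Z * 2) + 1 <= v) (ltac:(lia) : v <= n%:Z * 2 + 1).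
  have h1 := toX_sq' (ofX n u); have h2 := toX_sq' (ofX n v).
  rewrite tu in h1; rewrite tv in h2.
  apply/eqP; move: e2 h1 h2; clear; lia.
- move=> [i j]; rewrite !inE /= => /eqP e.
  have hx := toX_sq' i; have hy := toX_sq' j.
  have E : 3 * (toX n i * toX n i) + 5 * (toX n j * toX n j) = 8 * t.+1%:Z by lia.
  have [o1 [o2 e2]] := Fm_ok (toX_odd n i) (toX_odd n j) E.
  set x := (Fm _ _).1 in o1 o2 e2 *; set y := (Fm _ _).2 in o1 o2 e2 *.
  clearbody x y.
  have bu : x * x <= 16 * t.+1%:Z by move: e2; clear; nia.
  have bv : y * y <= 16 * t.+1%:Z by move: e2; clear; nia.
  have [bu1 bu2] := andP (sq_bound hs bu); have [bv1 bv2] := andP (sq_bound hs bv).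
  have tu := toX_ofX o1 (ltac:(lia) : - (n%:Z * 2) + 1 <= x) (ltac:(lia) : x <= n%:Z * 2 + 1).
  have tv := toX_ofX o2 (ltac:(lia) : - (n%:Z * 2) + 1 <= y) (ltac:(lia) : y <= n%:Z * 2 + 1).
  have h1 := toX_sq' (ofX n x); have h2 := toX_sq' (ofX n y).
  rewrite tu in h1; rewrite tv in h2.
  apply/eqP; move: e2 h1 h2; clear; lia.
- move=> [i j]; rewrite !inE /= => /eqP e.
  have hx := toX_sq' i; have hy := toX_sq' j.
  have E : toX n i * toX n i + 15 * (toX n j * toX n j) = 16 * t.+1%:Z by lia.
  have [o1 [o2 [e2 e3]]] := Gm_ok (toX_odd n i) (toX_odd n j) E.
  rewrite /fB /gB /=.
  set u := (Gm _ _).1 in o1 o2 e2 e3 *; set v := (Gm _ _).2 in o1 o2 e2 e3 *.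
  clearbody u v.
  have bu : u * u <= 16 * t.+1%:Z by move: e2; clear; nia.
  have bv : v * v <= 16 * t.+1%:Z by move: e2; clear; nia.
  have [bu1 bu2] := andP (sq_bound hs bu); have [bv1 bv2] := andP (sq_bound hs bv).
  have tu := toX_ofX o1 (ltac:(lia) : - (n%:Z * 2) + 1 <= u) (ltac:(lia) : u <= n%:Z * 2 + 1).
  have tv := toX_ofX o2 (ltac:(lia) : - (n%:Z * 2) + 1 <= v) (ltac:(lia) : v <= n%:Z * 2 + 1).
  by rewrite tu tv e3 /= !ofX_toX.
- move=> [i j]; rewrite !inE /= => /eqP e.
  have hx := toX_sq' i; have hy := toX_sq' j.
  have E : 3 * (toX n i * toX n i) + 5 * (toX n j * toX n j) = 8 * t.+1%:Z by lia.
  have [o1 [o2 e2]] := Fm_ok (toX_odd n i) (toX_odd n j) E.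
  have GF' := GF (toX_odd n i) (toX_odd n j).
  rewrite /fB /gB /=.
  set x := (Fm _ _).1 in o1 o2 e2 GF' *; set y := (Fm _ _).2 in o1 o2 e2 GF' *.
  clearbody x y.
  have bu : x * x <= 16 * t.+1%:Z by move: e2; clear; nia.
  have bv : y * y <= 16 * t.+1%:Z by move: e2; clear; nia.
  have [bu1 bu2] := andP (sq_bound hs bu); have [bv1 bv2] := andP (sq_bound hs bv).
  have tu := toX_ofX o1 (ltac:(lia) : - (n%:Z * 2) + 1 <= x) (ltac:(lia) : x <= n%:Z * 2 + 1).
  have tv := toX_ofX o2 (ltac:(lia) : - (n%:Z * 2) + 1 <= y) (ltac:(lia) : y <= n%:Z * 2 + 1).
  by rewrite tu tv GF' /= !ofX_toX.
Qed.

Lemma coef_PP a b n t : (Psi a n * Psi b n)`_t =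
  (#|[set p : 'I_(n.*2.+1) * 'I_(n.*2.+1) | (a * tz n p.1 + b * tz n p.2 == t)%N]|)%:R.
Proof.
rewrite /Psi mulr_suml coef_sum.
under eq_bigr => i _ do rewrite mulr_sumr coef_sum.
rewrite pair_big /=.
under eq_bigr => p _ do rewrite -exprD coefXn.
set S := [set p | _].
rewrite (eq_bigr (fun p => ((p \in S) : nat)%:R)); last by move=> p _; rewrite inE eq_sym.
rewrite -natr_sum; congr (_%:R); rewrite -sum1_card [RHS]big_mkcond /=.
by apply: eq_bigr => p _; case: (p \in S).
Qed.

Lemma coef_even (g h : {poly int}) t : ((g \Po 'X^2) * h)`_(t.*2) = (g * even_poly h)`_t.
Proof.
rewrite -{1}(poly_even_odd h) mulrDr coefD mulrA -!comp_polyM coefMX.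
rewrite !coef_comp_poly_Xn // -muln2 dvdn_mull // mulnK //.
case: ifP => h1; first by rewrite addr0.
case: ifP => h2; last by rewrite addr0.
exfalso; move: h2 h1 => /dvdnP [k hk] /eqP h1; lia.
Qed.

Lemma eq_cg N x y : x = y -> cg N x y.
Proof. by move=> ->; apply: cg_refl. Qed.

Lemma cg_mul1 N a b : cg N a 1 -> cg N b 1 -> cg N (a * b) 1.
Proof. by move=> ha hb; rewrite -(mulr1 1); apply: cg_mul. Qed.

Lemma main_coef t :
  let N := t.*2 in
  let F := eta_trunc 6 N * eta_trunc 10 N * etainv_trunc 1 N * etainv_trunc 15 N in
  F`_(t.*2) = (F * F)`_t.
Proof.
move=> N F.
set n := (4 * t + 5)%N.
have hn : (N.*2 < n)%N by rewrite /N /n; lia.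
have h1 := @gauss 1 N N n isT (leqnn N) hn.
have h15 := @gauss 15 N N n isT (leqnn N) hn.
have h3 := @gauss 3 N N n isT (leqnn N) hn.
have h5 := @gauss 5 N N n isT (leqnn N) hn.
have e2 : eta_trunc 2 N = eta_trunc 1 N * dd 1 N by rewrite eta_dd.
have e30 : eta_trunc 30 N = eta_trunc 15 N * dd 15 N by rewrite eta_dd.
have e6 : eta_trunc 6 N = eta_trunc 3 N * dd 3 N by rewrite eta_dd.
have e10 : eta_trunc 10 N = eta_trunc 5 N * dd 5 N by rewrite eta_dd.
have i1 := @eta_inv 1 N N isT (leqnn N).
have i15 := @eta_inv 15 N N isT (leqnn N).
have i2 := @eta_inv 2 N N isT (leqnn N).
have i30 := @eta_inv 30 N N isT (leqnn N).
set G := eta_trunc 3 N * eta_trunc 5 N * etainv_trunc 1 N * etainv_trunc 1 N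
         * etainv_trunc 15 N * etainv_trunc 15 N.
have hG2 : G \Po 'X^2 = eta_trunc 6 N * eta_trunc 10 N * etainv_trunc 2 N * etainv_trunc 2 N
         * etainv_trunc 30 N * etainv_trunc 30 N.
  by rewrite /G !comp_polyM !eta_comp !etainv_comp.
set H := Psi 1 n * Psi 15 n.
have SA : cg N ((G \Po 'X^2) * H) (F *+ 4).
  apply: (cg_trans (cg_mull _ (cg_mul h1 h15))).
  set Y := _ * (_ * _).
  apply: (cg_trans (q := Y * ((eta_trunc 1 N * etainv_trunc 1 N) * (eta_trunc 15 N * etainv_trunc 15 N)))).
    by rewrite -[X in cg _ X _]mulr1; apply: cg_mull; apply: cg_sym; apply: cg_mul1.
  have -> : Y * ((eta_trunc 1 N * etainv_trunc 1 N) * (eta_trunc 15 N * etainv_trunc 15 N)) =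
     (F *+ 4) * (((eta_trunc 2 N * etainv_trunc 2 N) * (eta_trunc 2 N * etainv_trunc 2 N)) *
               ((eta_trunc 30 N * etainv_trunc 30 N) * (eta_trunc 30 N * etainv_trunc 30 N))).
    rewrite /Y hG2 /F.
    have -> : (1 * 2 = 2)%N by [].
    have -> : (15 * 2 = 30)%N by [].
    rewrite e2 e30; ring.
  rewrite -[X in cg _ _ X]mulr1; apply: cg_mull.
  by apply: cg_mul1; apply: cg_mul1.
have SD : cg N (G * (Psi 3 n * Psi 5 n)) ((F * F) *+ 4).
  apply: (cg_trans (cg_mull _ (cg_mul h3 h5))).
  have -> : (3 * 2 = 6)%N by [].
  have -> : (5 * 2 = 10)%N by [].
  rewrite /G /F e6 e10; apply: eq_cg; ring.
have cA := cg_coef SA (leqnn N).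
have cD := cg_coef SD (ltac:(rewrite /N; lia) : (t <= N)%N).
rewrite /N coef_even in cA.
have SC : (G * even_poly H)`_t = (G * (Psi 3 n * Psi 5 n))`_t.
  rewrite !coefM; apply: eq_bigr => j _; congr (_ * _).
  rewrite coef_even_poly /H !coef_PP; congr (_%:R); apply: count_eq.
  rewrite /n; lia.
rewrite SC cD !coefMn in cA.
have H4 : forall a b : int, a *+ 4 = b *+ 4 -> a = b.
  by move=> a b; rewrite !mulrS !mulr0n !addr0; lia.
exact: H4.
Qed.

Lemma Pstab i M : (i <= M)%N -> P_6_10_1_15 i =
  (eta_trunc 6 M * eta_trunc 10 M * etainv_trunc 1 M * etainv_trunc 15 M)`_i.
Proof.
move=> hi; rewrite /P_6_10_1_15; apply: esym; apply: (cg_coef (N := i)) => //.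
apply: cg_mul; first apply: cg_mul; first apply: cg_mul.
- by apply: eta_stab.
- by apply: eta_stab.
- by apply: etainv_stab.
- by apply: etainv_stab.
Qed.

Theorem theorem3p5 : convolutive 2 P_6_10_1_15.
Proof.
move=> t.
rewrite /ps_pow /= /ps_mul.
have Hone : forall m, \sum_(i < m.+1) P_6_10_1_15 i * ps_one (m - i)%N = P_6_10_1_15 m.
  move=> m; rewrite big_ord_recr /= subnn /ps_one /= mulr1 big1 ?add0r // => i _.
  by rewrite ifF ?mulr0 //; have := ltn_ord i; lia.
under eq_bigr => i _ do rewrite Hone.
have := main_coef t => /=.
rewrite mul2n (Pstab (leqnn t.*2)) => ->.
rewrite coefM; apply: eq_bigr => i _.
rewrite -!Pstab //; first lia.
by have := ltn_ord i; lia.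
Qed.
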